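(* In the setting described in the context, let $\gamma_1,\ldots,\gamma_K>0$ and consider $$\mathbf{P3}:\quad \min_{\mathbf{p}_1,\ldots,\mathbf{p}_K\in\mathbb{C}^{M_t}}\sum_{k=1}^K\mathbf{p}_k^H\mathbf{p}_k\quad\text{s.t.}\quad \mathcal{C}_k\le 0,\ k=1,\ldots,K,$$ where $\mathcal{C}_k=1+\frac{1}{\sigma_n^2}\sum_{i\neq k}\mathbf{p}_i^H\mathbf{R}_k\mathbf{p}_i-\frac{1}{\sigma_n^2\gamma_k}\mathbf{p}_k^H\mathbf{R}_k\mathbf{p}_k$. Let $(\mathbf{p}_1,\ldots,\mathbf{p}_K)$ be an optimal solution of $\mathbf{P3}$ with optimal Lagrange multipliers $\mu_1,\ldots,\mu_K\ge0$, i.e. together they satisfy the KKT conditions $\mathbf{p}_k+\sum_{i\neq k}\frac{\mu_i}{\sigma_n^2}\mathbf{R}_i\mathbf{p}_k-\frac{\mu_k}{\sigma_n^2\gamma_k}\mathbf{R}_k\mathbf{p}_k=\mathbf{0}$ and $\mu_k\mathcal{C}_k=0$ for all $k$. Write $\mathbf{p}_k=\sqrt{\rho_k}\,\underline{\mathbf{p}}_k$ with $\rho_k\ge0$ and $\underline{\mathbf{p}}_k^H\underline{\mathbf{p}}_k=1$, and set $\mathbf{S}_k=\mu_k\mathbf{R}_k$ and $\mathbf{N}_k=\sigma_n^2\mathbf{I}+\sum_{i\neq k}\mu_i\mathbf{R}_i$. Then for each $k$, $\underline{\mathbf{p}}_k$ is a generalized eigenvector of the matrix pair $(\mathbf{S}_k,\mathbf{N}_k)$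 associated with its maximum generalized eigenvalue, and $\gamma_k$ equals this maximum generalized eigenvalue.
   Context: A base station with $M_t$ antennas serves $K$ single-antenna users; $\sigma_n^2>0$ is the noise variance. For each user $k$, $\mathbf{R}_k=\mathbb{E}\{\mathbf{h}_k\mathbf{h}_k^H\}=\beta_k^2\bar{\mathbf{h}}_k\bar{\mathbf{h}}_k^H+(1-\beta_k^2)\mathbf{V}\boldsymbol{\Lambda}_k\mathbf{V}^H\in\mathbb{C}^{M_t\times M_t}$, where $\bar{\mathbf{h}}_k\in\mathbb{C}^{M_t}$, $\beta_k\in[0,1]$, $\mathbf{V}\in\mathbb{C}^{M_t\times NM_t}$ is a fixed matrix (a Kronecker product of oversampled DFT matrices), and $\boldsymbol{\Lambda}_k$ is an $NM_t\times NM_t$ diagonal matrix with nonnegative diagonal entries; this is the covariance of the channel $\mathbf{h}_k=\beta_k\bar{\mathbf{h}}_k+\sqrt{1-\beta_k^2}\mathbf{V}(\mathbf{m}_k\odot\mathbf{w}_k)$ with $\mathbf{w}_k$ i.i.d. $\mathcal{CN}(0,1)$ entries and $\boldsymbol{\Lambda}_k=\mathrm{diag}(\mathbf{m}_k\odot\mathbf{m}_k)$. A generalized eigenvalue $\lambda$ of a pair $(\mathbf{S},\mathbf{N})$ with eigenvector $\mathbf{x}\neq\mathbf{0}$ satisfies $\mathbf{S}\mathbf{x}=\lambda\mathbf{N}\mathbf{x}$. *)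

(* Defs.v *)
From HB Require Import structures.
From mathcomp Require Import all_boot all_order all_algebra.
From mathcomp Require Import complex.
From mathcomp Require Import reals.
Set Implicit Arguments. Unset Strict Implicit. Unset Printing Implicit Defensive.
Import Order.TTheory GRing.Theory Num.Theory.
Local Open Scope ring_scope.

Definition herm (R : realType) (m n : nat) (A : 'M[R[i]]_(m, n)) : 'M[R[i]]_(n, m) :=
  (map_mx Num.conj A)^T.

Definition qform (R : realType) (n : nat) (x : 'cV[R[i]]_n) (A : 'M[R[i]]_n)
  (y : 'cV[R[i]]_n) : R[i] := (herm x *m A *m y) 0 0.

Definition dotH (R : realType) (n : nat) (x y : 'cV[R[i]]_n) : R[i] :=
  (herm x *m y) 0 0.

Definition covR (R : realType) (Mt NMt : nat) (beta : R) (hbar : 'cV[R[i]]_Mt)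
  (V : 'M[R[i]]_(Mt, NMt)) (lam : 'rV[R]_NMt) : 'M[R[i]]_Mt :=
  ((beta ^+ 2)%:C)%C *: (hbar *m herm hbar)
  + ((1 - beta ^+ 2)%:C)%C *: (V *m diag_mx (map_mx (fun r => (r%:C)%C) lam) *m herm V).

Definition gen_eigvec (F : fieldType) (n : nat) (S N : 'M[F]_n) (lambda : F)
  (x : 'cV[F]_n) : Prop :=
  x != 0 /\ S *m x = lambda *: (N *m x).

Definition gen_eigval (F : fieldType) (n : nat) (S N : 'M[F]_n) (lambda : F) : Prop :=
  exists x, gen_eigvec S N lambda x.

Definition max_gen_eigval (R : realType) (n : nat) (S N : 'M[R[i]]_n) (lambda : R[i]) : Prop :=
  gen_eigval S N lambda /\ forall l, gen_eigval S N l -> l <= lambda.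

Definition Ck (R : realType) (Mt K : nat) (sigma2 : R) (gamma : 'I_K -> R)
  (Rk : 'I_K -> 'M[R[i]]_Mt) (p : 'I_K -> 'cV[R[i]]_Mt) (k : 'I_K) : R[i] :=
  1 + ((sigma2^-1)%:C)%C * (\sum_(i < K | i != k) qform (p i) (Rk k) (p i))
    - (((sigma2 * gamma k)^-1)%:C)%C * qform (p k) (Rk k) (p k).

Definition P3_feasible (R : realType) (Mt K : nat) (sigma2 : R) (gamma : 'I_K -> R)
  (Rk : 'I_K -> 'M[R[i]]_Mt) (p : 'I_K -> 'cV[R[i]]_Mt) : Prop :=
  forall k, Ck sigma2 gamma Rk p k <= 0.

Definition P3_optimal (R : realType) (Mt K : nat) (sigma2 : R) (gamma : 'I_K -> R)
  (Rk : 'I_K -> 'M[R[i]]_Mt) (p : 'I_K -> 'cV[R[i]]_Mt) : Prop :=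
  P3_feasible sigma2 gamma Rk p /\
  forall q, P3_feasible sigma2 gamma Rk q ->
    \sum_(k < K) dotH (p k) (p k) <= \sum_(k < K) dotH (q k) (q k).

(* Main.v *)
Require Import Defs.
From HB Require Import structures.
From mathcomp Require Import all_boot all_order all_algebra.
From mathcomp Require Import complex.
From mathcomp Require Import reals.
From mathcomp Require Import ring lra.
Import Order.TTheory GRing.Theory Num.Theory.
Local Open Scope ring_scope.
Section Herm.
Variable R : realType.
Local Notation C := (R[i]).
Local Notation "x %:C" := (real_complex R x).

Lemma conj_realC (r : R) : (r%:C)^* = r%:C.
Proof. by apply: conj_Creal; rewrite complex_real. Qed.

Lemma hermM m n l (A : 'M[C]_(m, n)) (B : 'M[C]_(n, l)) :
  herm (A *m B) = herm B *m herm A.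
Proof. by rewrite /herm map_mxM trmx_mul. Qed.

Lemma hermK m n (A : 'M[C]_(m, n)) : herm (herm A) = A.
Proof. by apply/matrixP=> i j; rewrite !mxE conjCK. Qed.

Lemma hermD m n (A B : 'M[C]_(m, n)) : herm (A + B) = herm A + herm B.
Proof. by apply/matrixP=> i j; rewrite !mxE rmorphD. Qed.

Lemma hermN m n (A : 'M[C]_(m, n)) : herm (- A) = - herm A.
Proof. by apply/matrixP=> i j; rewrite !mxE rmorphN. Qed.

Lemma hermB m n (A B : 'M[C]_(m, n)) : herm (A - B) = herm A - herm B.
Proof. by rewrite hermD hermN. Qed.

Lemma hermZ m n a (A : 'M[C]_(m, n)) : herm (a *: A) = a^* *: herm A.
Proof. by apply/matrixP=> i j; rewrite !mxE rmorphM. Qed.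

Lemma herm_sum m n (I : finType) (P : pred I) (F : I -> 'M[C]_(m, n)) :
  herm (\sum_(i | P i) F i) = \sum_(i | P i) herm (F i).
Proof.
elim/big_rec2: _ => [|i B C' _ <-]; last by rewrite hermD.
by apply/matrixP=> i j; rewrite !mxE conjC0.
Qed.

Lemma herm1 n : herm (1%:M : 'M[C]_n) = 1%:M.
Proof. by apply/matrixP=> i j; rewrite !mxE eq_sym conjC_nat. Qed.

Lemma herm_diag n (d : 'rV[R]_n) :
  herm (diag_mx (map_mx (fun r => r%:C) d)) = diag_mx (map_mx (fun r => r%:C) d).
Proof.
apply/matrixP=> i j; rewrite !mxE rmorphMn eq_sym.
by case: eqP => [->|]; rewrite ?mulr0n ?mulr1n //; apply: conj_realC.
Qed.

Lemma herm00 (M : 'M[C]_1) : herm M 0 0 = (M 0 0)^*.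
Proof. by rewrite !mxE. Qed.

Lemma qformE n (x y : 'cV[C]_n) A : qform x A y = (herm x *m (A *m y)) 0 0.
Proof. by rewrite /qform mulmxA. Qed.

Lemma qform_conj n (x y : 'cV[C]_n) A : herm A = A -> (qform x A y)^* = qform y A x.
Proof.
by move=> hA; rewrite /qform -herm00 !hermM hA hermK mulmxA.
Qed.

End Herm.
Section Q.
Variable R : realType.
Local Notation C := (R[i]).
Local Notation "x %:C" := (real_complex R x).

Lemma dotHE n (x y : 'cV[C]_n) : dotH x y = \sum_i (x i 0)^* * y i 0.
Proof. by rewrite /dotH mxE; apply: eq_bigr => i _; rewrite !mxE. Qed.

Lemma dotH_ge0 n (x : 'cV[C]_n) : 0 <= dotH x x.
Proof. by rewrite dotHE; apply: sumr_ge0 => i _; rewrite mulrC mul_conjC_ge0. Qed.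

Lemma dotH_eq0 n (x : 'cV[C]_n) : dotH x x = 0 -> x = 0.
Proof.
rewrite dotHE => /eqP; rewrite psumr_eq0 => [/allP H|i _]; last by rewrite mulrC mul_conjC_ge0.
apply/matrixP => i j; rewrite (ord1 j) mxE.
have := H i (mem_index_enum _); rewrite /= mulrC mul_conjC_eq0.
by move/eqP.
Qed.

Lemma qformDm n (x y : 'cV[C]_n) A B : qform x (A + B) y = qform x A y + qform x B y.
Proof. by rewrite /qform mulmxDr mulmxDl mxE. Qed.


Lemma qformZm n (x y : 'cV[C]_n) a A : qform x (a *: A) y = a * qform x A y.
Proof. by rewrite /qform -scalemxAr -scalemxAl mxE. Qed.

Lemma qformBm n (x y : 'cV[C]_n) A B : qform x (A - B) y = qform x A y - qform x B y.
Proof. by rewrite qformDm -scaleN1r qformZm mulN1r. Qed.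

Lemma qform_sum n (x y : 'cV[C]_n) (I : finType) (P : pred I) F :
  qform x (\sum_(i | P i) F i) y = \sum_(i | P i) qform x (F i) y.
Proof.
elim/big_rec2: _ => [|i B C' _ <-]; last by rewrite qformDm.
by rewrite /qform mulmx0 mul0mx mxE.
Qed.

Lemma qform1 n (x y : 'cV[C]_n) : qform x 1%:M y = dotH x y.
Proof. by rewrite /qform mulmx1. Qed.

Lemma qformZv n (x y : 'cV[C]_n) a b A : qform (a *: x) A (b *: y) = a^* * b * qform x A y.
Proof.
by rewrite /qform hermZ -!scalemxAl -scalemxAr !mxE mulrA.
Qed.

Lemma qformZl n (x y : 'cV[C]_n) a A : qform (a *: x) A y = a^* * qform x A y.
Proof. by rewrite /qform hermZ -!scalemxAl !mxE. Qed.

Lemma qformZr n (x y : 'cV[C]_n) b A : qform x A (b *: y) = b * qform x A y.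
Proof. by rewrite /qform -!scalemxAr !mxE. Qed.

Lemma ReD (a b : C) : complex.Re (a + b) = complex.Re a + complex.Re b.
Proof. by case: a; case: b. Qed.

Lemma ReM (r : R) (z : C) : complex.Re (r%:C * z) = r * complex.Re z.
Proof. by case: z => a b /=; rewrite mul0r subr0. Qed.

Lemma Re_ge0 (z : C) : 0 <= z -> 0 <= complex.Re z.
Proof. by rewrite lecE => /andP[]. Qed.

Lemma qformDv n (x y : 'cV[C]_n) A : qform (x + y) A (x + y) =
  qform x A x + qform x A y + qform y A x + qform y A y.
Proof.
by rewrite /qform hermD !mulmxDl !mulmxDr !mxE !addrA.
Qed.

Lemma gram_ge0 m (c : 'rV[C]_m) : 0 <= (c *m herm c) 0 0.
Proof.
by rewrite mxE; apply: sumr_ge0 => i _; rewrite !mxE mul_conjC_ge0.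
Qed.

Lemma gram_diag_ge0 m (c : 'rV[C]_m) (d : 'rV[R]_m) : (forall j, 0 <= d 0 j) ->
  0 <= (c *m diag_mx (map_mx (fun r => r%:C) d) *m herm c) 0 0.
Proof.
move=> hd; rewrite mxE; apply: sumr_ge0 => i _.
rewrite mul_mx_diag !mxE mulrAC; apply: mulr_ge0; first exact: mul_conjC_ge0.
by rewrite ler0c.
Qed.

Lemma covR_herm Mt NMt beta hbar V lam :
  herm (@covR R Mt NMt beta hbar V lam) = covR beta hbar V lam.
Proof.
rewrite /covR hermD !hermZ !conj_realC !hermM !hermK herm_diag.
by rewrite mulmxA.
Qed.

Lemma covR_psd Mt NMt (beta : R) hbar V (lam : 'rV[R]_NMt) (x : 'cV[C]_Mt) :
  0 <= beta <= 1 -> (forall j, 0 <= lam 0 j) ->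
  0 <= qform x (@covR R Mt NMt beta hbar V lam) x.
Proof.
move=> /andP[b0 b1] hl; rewrite /covR qformDm !qformZm.
have e1 : qform x (hbar *m herm hbar) x = ((herm x *m hbar) *m herm (herm x *m hbar)) 0 0.
  by rewrite /qform hermM hermK !mulmxA.
have e2 : qform x (V *m diag_mx (map_mx (fun r => r%:C) lam) *m herm V) x =
   ((herm x *m V) *m diag_mx (map_mx (fun r => r%:C) lam) *m herm (herm x *m V)) 0 0.
  by rewrite /qform hermM hermK !mulmxA.
rewrite e1 e2; apply: addr_ge0; apply: mulr_ge0.
- by rewrite ler0c exprn_ge0.
- exact: gram_ge0.
- by rewrite ler0c subr_ge0 expr_le1.
- exact: gram_diag_ge0.
Qed.

End Q.
Section Zmat.
Variable F : realFieldType.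

Lemma zmat_min n (W : 'M[F]_n) (v : 'cV[F]_n) m :
  (forall i j, i != j -> W i j <= 0) -> (forall j, v m 0 <= v j 0) ->
  (W *m v) m 0 <= v m 0 * \sum_j W m j.
Proof.
move=> hW hm; rewrite mxE mulr_sumr; apply: ler_sum => j _.
rewrite [v m 0 * _]mulrC; have [->|ne] := eqVneq m j; first by [].
by apply: (ler_wnM2l (hW _ _ ne)); apply: hm.
Qed.

Lemma zmat_nonneg n (W : 'M[F]_n) (v : 'cV[F]_n) :
  (forall i j, i != j -> W i j <= 0) -> (forall i, 0 < \sum_j W i j) ->
  (forall i, 0 <= (W *m v) i 0) -> forall i, 0 <= v i 0.
Proof.
move=> hW hr hv i.
have [m0 hm'] : exists m, forall j, v m 0 <= v j 0.
  by case: (@arg_minP _ _ _ i predT (fun j => v j 0) isT) => m _ hm; exists m => j; exact: hm.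
have := le_trans (hv m0) (@zmat_min _ _ _ _ hW hm').
rewrite pmulr_lge0 // => h; exact: le_trans h (hm' i).
Qed.

Lemma zmat_pos n (W : 'M[F]_n) (v : 'cV[F]_n) :
  (forall i j, i != j -> W i j <= 0) -> (forall i, 0 < \sum_j W i j) ->
  (forall i, 0 < (W *m v) i 0) -> forall i, 0 < v i 0.
Proof.
move=> hW hr hv i.
have [m0 hm'] : exists m, forall j, v m 0 <= v j 0.
  by case: (@arg_minP _ _ _ i predT (fun j => v j 0) isT) => m _ hm; exists m => j; exact: hm.
have := lt_le_trans (hv m0) (@zmat_min _ _ _ _ hW hm').
rewrite pmulr_lgt0 // => h; exact: lt_le_trans h (hm' i).
Qed.

Lemma zmat_solve n (W : 'M[F]_n) (b : 'cV[F]_n) :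
  (forall i j, i != j -> W i j <= 0) -> (forall i, 0 < \sum_j W i j) ->
  (forall i, 0 < b i 0) ->
  exists s : 'cV[F]_n, W *m s = b /\ forall i, 0 < s i 0.
Proof.
move=> hW hr hb.
have hU : W \in unitmx.
  rewrite unitmxE unitfE -det_tr; apply/negP => /det0P [v vn0 hv].
  have hv' : W *m v^T = 0 by rewrite -[W]trmxK -trmx_mul hv trmx0.
  have h1 := @zmat_nonneg _ W (v^T) hW hr.
  have h2 := @zmat_nonneg _ W (- v^T) hW hr.
  move/eqP: vn0; apply; apply/matrixP => i j; rewrite (ord1 i) !mxE.
  have a1 : 0 <= v^T j 0 by apply: h1 => k; rewrite hv' mxE.
  have a2 : 0 <= (- v^T) j 0 by apply: h2 => k; rewrite mulmxN hv' oppr0 mxE.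
  rewrite !mxE oppr_ge0 in a1 a2.
  by apply/eqP; rewrite eq_le a2 a1.
exists (invmx W *m b); split; first by rewrite mulKVmx.
by apply: (@zmat_pos _ W) => // i; rewrite mulKVmx.
Qed.

End Zmat.
Lemma sum_only_k (T : zmodType) n (F : 'I_n -> T) k :
  (forall i, i != k -> F i = 0) -> \sum_i F i = F k.
Proof. by move=> h; rewrite (bigD1 k) //= big1 ?addr0. Qed.

Lemma sum_ge_term (F0 : realFieldType) n (F : 'I_n -> F0) j :
  (forall i, 0 <= F i) -> F j <= \sum_i F i.
Proof.
move=> h; rewrite (bigD1 j) //=.
have : 0 <= \sum_(i | i != j) F i by apply: sumr_ge0.
lra.
Qed.

Lemma abs_if_le (F0 : realFieldType) (b : bool) (u v : F0) : 0 <= u -> 0 <= v ->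
  `|if b then u else - v| <= u + v.
Proof.
move=> hu hv; case: b; [rewrite ger0_norm // | rewrite normrN ger0_norm //]; lra.
Qed.

Lemma pos_from (F0 : realFieldType) (a b : F0) : 1 <= b -> - 1 < a - b -> 0 < a.
Proof. move=> h1 h2; lra. Qed.

Lemma bound1 (F0 : realFieldType) (e a b : F0) : 0 < e -> e <= 1 ->
  `|e * a + e ^+ 2 * b| <= e * (`|a| + `|b|).
Proof.
move=> he he1; apply: le_trans (ler_normD _ _) _.
rewrite normrM (gtr0_norm he) normrM (gtr0_norm (exprn_gt0 2 he)).
have hb := normr_ge0 b; have ha := normr_ge0 a.
have h : 0 <= e * (1 - e) by rewrite mulr_ge0 ?subr_ge0 // ltW.
rewrite expr2; nra.
Qed.

Lemma bound2 (F0 : realFieldType) (c d E S T e : F0) : `|c| <= d -> 0 <= e -> 0 <= S ->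
  `|E| <= e * S -> d * S <= T -> e * T < 1 -> `|c * E| < 1.
Proof.
move=> h1 h2 h3 h4 h5 h6; rewrite normrM.
have hc := normr_ge0 c; have hE := normr_ge0 E.
have h7 : `|c| * `|E| <= d * `|E| by rewrite ler_wpM2r.
have h8 : d * `|E| <= d * (e * S) by rewrite ler_wpM2l // (le_trans hc h1).
have h9 : d * (e * S) <= e * T by rewrite mulrCA ler_wpM2l.
lra.
Qed.

Lemma exch_neq (T : nmodType) K (F : 'I_K -> 'I_K -> T) :
  \sum_j \sum_(i | i != j) F i j = \sum_j \sum_(i | i != j) F j i.
Proof.
rewrite (exchange_big_dep xpredT) //=.
by apply: eq_bigr => i _; apply: eq_bigl => j; rewrite eq_sym.
Qed.

Section Main.
Variable R : realType.
Local Notation C := (R[i]).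
Local Notation "x %:C" := (real_complex R x).
Variables (Mt K : nat) (sigma2 : R) (gamma : 'I_K -> R) (Rk : 'I_K -> 'M[C]_Mt)
  (p : 'I_K -> 'cV[C]_Mt) (mu : 'I_K -> R).
Hypothesis hs : 0 < sigma2.
Hypothesis hg : forall k, 0 < gamma k.
Hypothesis hRh : forall k, herm (Rk k) = Rk k.
Hypothesis hRp : forall k x, 0 <= qform x (Rk k) x.
Hypothesis hopt : P3_optimal sigma2 gamma Rk p.
Hypothesis hKKT : forall k, p k + \sum_(i < K | i != k) (((mu i / sigma2)%:C) *: (Rk i *m p k))
               - (((mu k / (sigma2 * gamma k))%:C) *: (Rk k *m p k)) = 0.
Hypothesis hsl : forall k, ((mu k)%:C) * Ck sigma2 gamma Rk p k = 0.

Definition Bm j := 1%:M + \sum_(i < K | i != j) ((mu i / sigma2)%:C *: Rk i)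
  - ((mu j / (sigma2 * gamma j))%:C *: Rk j).

Lemma Bp j : Bm j *m p j = 0.
Proof.
rewrite /Bm mulmxBl mulmxDl mul1mx mulmx_suml -scalemxAl; apply: etrans (hKKT j).
by congr (_ + _ - _); apply: eq_bigr => i _; rewrite scalemxAl.
Qed.

Lemma Bherm j : herm (Bm j) = Bm j.
Proof.
rewrite /Bm hermB hermD herm1 herm_sum hermZ conj_realC hRh.
by congr (_ + _ - _); apply: eq_bigr => i _; rewrite hermZ conj_realC hRh.
Qed.

Lemma qform_real x j : qform x (Rk j) x = (complex.Re (qform x (Rk j) x))%:C.
Proof.
have := hRp j x; case: (qform x (Rk j) x) => a b; rewrite lecE /=.
by case/andP => /eqP -> _.
Qed.

Lemma Ck_ext q q' j : (forall i, q i = q' i) ->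
  Ck sigma2 gamma Rk q j = Ck sigma2 gamma Rk q' j.
Proof.
move=> h; rewrite /Ck h; congr (_ + _ * _ - _).
by apply: eq_bigr => i _; rewrite h.
Qed.

Lemma lagr q : \sum_j dotH (q j) (q j) + \sum_j (mu j)%:C * Ck sigma2 gamma Rk q j =
  \sum_j (mu j)%:C + \sum_j qform (q j) (Bm j) (q j).
Proof.
set Q := fun j i => qform (q j) (Rk i) (q j).
set s := (sigma2^-1)%:C.
have E1 : \sum_j (mu j)%:C * Ck sigma2 gamma Rk q j =
   \sum_j (mu j)%:C + \sum_j \sum_(i | i != j) ((mu j)%:C * s * Q i j)
   - \sum_j ((mu j / (sigma2 * gamma j))%:C * Q j j).
  rewrite -big_split -sumrB /=; apply: eq_bigr => j _.
  rewrite /Ck mulrBr mulrDr mulr1.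
  congr (_ + _ - _); first by rewrite !mulr_sumr; apply: eq_bigr => i _; rewrite /Q /s mulrA.
  by rewrite /Q rmorphM /= mulrA.
have E2 : \sum_j qform (q j) (Bm j) (q j) =
   \sum_j dotH (q j) (q j) + \sum_j \sum_(i | i != j) ((mu j)%:C * s * Q i j)
   - \sum_j ((mu j / (sigma2 * gamma j))%:C * Q j j).
  rewrite exch_neq -big_split -sumrB /=; apply: eq_bigr => j _.
  rewrite /Bm qformBm qformDm qform1 qform_sum qformZm.
  congr (_ + _ - _); apply: eq_bigr => i _.
  by rewrite qformZm rmorphM.
rewrite E1 E2; set a := \sum_j dotH _ _; set b := \sum_j (mu j)%:C.
set c := \sum_j \sum_(i | _) _; set d := \sum_j _.
by rewrite !addrA [a + b]addrC.
Qed.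

Lemma qform_Bp_r j y : qform y (Bm j) (p j) = 0.
Proof. by rewrite qformE Bp mulmx0 mxE. Qed.

Lemma qform_Bp_l j y : qform (p j) (Bm j) y = 0.
Proof. by rewrite -qform_conj ?Bherm // qform_Bp_r conjC0. Qed.

Section PSD.
Variables (k : 'I_K) (x : 'cV[C]_Mt).

Definition vv (e : R) i := if i == k then p k + e%:C *: x else p i.

Lemma vv0 i : vv 0 i = p i.
Proof. by rewrite /vv; case: eqP => // ->; rewrite rmorph0 scale0r addr0. Qed.

Definition Aq e j i := locked (complex.Re (qform (vv e i) (Rk j) (vv e i))).

Lemma AqE e j i : Aq e j i = complex.Re (qform (vv e i) (Rk j) (vv e i)).
Proof. by rewrite /Aq -lock. Qed.

Definition Wm e : 'M[R]_K := \matrix_(j, i)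
  (if i == j then (sigma2 * gamma j)^-1 * Aq e j j else - (sigma2^-1 * Aq e j i)).

Lemma Ck_q e (s : 'cV[R]_K) : (forall i, 0 <= s i 0) -> forall j,
  Ck sigma2 gamma Rk (fun i => (Num.sqrt (s i 0))%:C *: vv e i) j = (1 - (Wm e *m s) j 0)%:C.
Proof.
move=> hs0 j.
have hq : forall i, qform ((Num.sqrt (s i 0))%:C *: vv e i) (Rk j)
    ((Num.sqrt (s i 0))%:C *: vv e i) = (s i 0 * Aq e j i)%:C.
  move=> i; rewrite AqE qformZv conj_realC -rmorphM -expr2 sqr_sqrtr // qform_real.
  by rewrite -rmorphM.
rewrite /Ck; under eq_bigr do rewrite hq.
rewrite hq -rmorph_sum.
suff <- : 1 + sigma2^-1 * (\sum_(i | i != j) s i 0 * Aq e j i)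
    - (sigma2 * gamma j)^-1 * (s j 0 * Aq e j j) = 1 - (Wm e *m s) j 0.
  by rewrite rmorphB rmorphD rmorph1 !rmorphM.
have hWjj : Wm e j j = (sigma2 * gamma j)^-1 * Aq e j j by rewrite /Wm mxE eqxx.
rewrite [(Wm e *m s) j 0]mxE [X in _ = 1 - X](bigD1 j) //= hWjj.
have -> : \sum_(i | i != j) Wm e j i * s i 0 = - (sigma2^-1 * \sum_(i | i != j) s i 0 * Aq e j i).
  rewrite mulr_sumr -sumrN; apply: eq_bigr => i hi.
  by rewrite /Wm mxE (negbTE hi); ring.
by ring.
Qed.

Lemma rowsum0 j : 1 <= (Wm 0 *m (const_mx (1:R) : 'cV[R]_K)) j 0.
Proof.
have := hopt.1 j.
rewrite (@Ck_ext _ (fun i => (Num.sqrt ((const_mx (1:R) : 'cV[R]_K) i 0))%:C *: vv 0 i)); last first.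
  by move=> i; rewrite mxE sqrtr1 rmorph1 scale1r vv0.
rewrite Ck_q; last by move=> i; rewrite mxE ler01.
by rewrite -(rmorph0 (real_complex R)) lecR subr_le0.
Qed.

Local Notation one := (const_mx (1:R) : 'cV[R]_K).

Lemma mulmx_one (W : 'M[R]_K) j : (W *m one) j 0 = \sum_i W j i.
Proof. by rewrite mxE; apply: eq_bigr => i _; rewrite mxE mulr1. Qed.

Lemma Wm_E e j i : Wm e j i =
  (if i == j then (sigma2 * gamma j)^-1 * Aq e j j else - (sigma2^-1 * Aq e j i)).
Proof. by rewrite /Wm mxE. Qed.
Lemma Aq_same e j i : i != k -> Aq e j i = Aq 0 j i.
Proof. by move=> hi; rewrite !AqE /vv (negbTE hi). Qed.
Lemma row_diff_gen (We W0 : 'M[R]_K) (Ae A0 : 'I_K -> R) j :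
  (forall i, We j i = if i == j then (sigma2 * gamma j)^-1 * Ae j else - (sigma2^-1 * Ae i)) ->
  (forall i, W0 j i = if i == j then (sigma2 * gamma j)^-1 * A0 j else - (sigma2^-1 * A0 i)) ->
  (forall i, i != k -> Ae i = A0 i) ->
  \sum_i We j i - \sum_i W0 j i =
  (if k == j then (sigma2 * gamma j)^-1 else - sigma2^-1) * (Ae k - A0 k).
Proof.
move=> he h0 hsm.
rewrite -sumrB (@sum_only_k _ _ _ k); last first.
  move=> i hi; rewrite he h0.
  by case: eqP => [<-|_]; rewrite hsm // subrr.
rewrite he h0.
case: eqP => [<-|_]; first by rewrite mulrBr.
by rewrite opprK mulNr mulrBr opprB addrC.
Qed.
Lemma row_diff e j : \sum_i Wm e j i - \sum_i Wm 0 j i =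
  (if k == j then (sigma2 * gamma j)^-1 else - sigma2^-1) * (Aq e j k - Aq 0 j k).
Proof.
apply: (@row_diff_gen (Wm e) (Wm 0) (Aq e j) (Aq 0 j)).
- exact: Wm_E.
- exact: Wm_E.
- by move=> i; apply: Aq_same.
Qed.

Definition al j := complex.Re (qform (p k) (Rk j) x + qform x (Rk j) (p k)).
Definition be j := complex.Re (qform x (Rk j) x).

Lemma Aq_diff e j : Aq e j k - Aq 0 j k = e * al j + e ^+ 2 * be j.
Proof.
rewrite !AqE vv0 /vv eqxx qformDv qformZr qformZl qformZv conj_realC -rmorphM.
rewrite !ReD !ReM /al /be ReD.
set a1 := complex.Re _; set a2 := complex.Re _; set a3 := complex.Re _; set a4 := complex.Re _.
rewrite expr2; ring.
Qed.
Definition dd j := (sigma2 * gamma j)^-1 + sigma2^-1.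
Definition TT := \sum_j dd j * (`|al j| + `|be j|).
Definition eps := (1 + TT)^-1.

Lemma dd_ge0 j : 0 <= dd j.
Proof.
have := hg j => hgj.
by rewrite /dd addr_ge0 // invr_ge0 ?mulr_ge0 // ltW.
Qed.

Lemma TT_ge0 : 0 <= TT.
Proof. by apply: sumr_ge0 => j _; rewrite mulr_ge0 ?dd_ge0 // addr_ge0. Qed.

Lemma eps_gt0 : 0 < eps.
Proof. by rewrite invr_gt0 ltr_wpDr ?TT_ge0. Qed.

Lemma eps_le1 : eps <= 1.
Proof. by rewrite invr_le1 ?unitfE ?lt0r_neq0 ?ltr_wpDr ?TT_ge0 // lerDl TT_ge0. Qed.

Lemma epsT : eps * TT < 1.
Proof.
rewrite mulrC ltr_pdivrMr; first by rewrite mul1r; lra.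
by rewrite ltr_wpDr ?TT_ge0.
Qed.

Lemma rowpos j : 0 < \sum_i Wm eps j i.
Proof.
have h0 := rowsum0 j; rewrite mulmx_one in h0.
have hd := row_diff eps j; rewrite Aq_diff in hd.
set c := (if k == j then _ else _) in hd.
have hc : `|c| <= dd j.
  have hgj := hg j.
  have i1 : 0 <= (sigma2 * gamma j)^-1 by rewrite invr_ge0 mulr_ge0 // ltW.
  have i2 : 0 <= sigma2^-1 by rewrite invr_ge0 ltW.
  by rewrite /c /dd; apply: abs_if_le.
have he := eps_gt0; have he1 := eps_le1.
have h1 : `|eps * al j + eps ^+ 2 * be j| <= eps * (`|al j| + `|be j|).
  exact: bound1.
have h2 : dd j * (`|al j| + `|be j|) <= TT.
  rewrite /TT; apply: sum_ge_term => i.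
  by rewrite mulr_ge0 ?dd_ge0 // addr_ge0.
have h3 : `|c * (eps * al j + eps ^+ 2 * be j)| < 1.
  apply: (@bound2 R _ _ _ _ _ _ hc (ltW he) _ h1 h2 epsT).
  by rewrite addr_ge0.
have := ltrNnormlW h3; rewrite -hd.
exact: pos_from h0.
Qed.

Lemma B_psd : 0 <= qform x (Bm k) x.
Proof.
have hZ : forall i j, i != j -> Wm eps i j <= 0.
  move=> i j hij; rewrite Wm_E eq_sym (negbTE hij) oppr_le0.
  apply: mulr_ge0; first by rewrite invr_ge0 ltW.
  by rewrite AqE; apply: Re_ge0; exact: hRp.
have hrow : forall i, 0 < \sum_j Wm eps i j by move=> i; exact: rowpos.
have hb : forall i, 0 < one i 0 by move=> i; rewrite mxE ltr01.
have [s [hWs hsp]] := @zmat_solve _ _ (Wm eps) one hZ hrow hb.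
set q := fun i => (Num.sqrt (s i 0))%:C *: vv eps i.
have hCq : forall j, Ck sigma2 gamma Rk q j = 0.
  move=> j; rewrite /q Ck_q; last by move=> i; exact: ltW.
  by rewrite hWs mxE subrr rmorph0.
have hfeas : P3_feasible sigma2 gamma Rk q by move=> j; rewrite hCq.
have hle := hopt.2 q hfeas.
have L1 : \sum_j dotH (p j) (p j) = \sum_j (mu j)%:C.
  have e1 : \sum_j (mu j)%:C * Ck sigma2 gamma Rk p j = 0 by apply: big1 => j _; exact: hsl.
  have e2 : \sum_j qform (p j) (Bm j) (p j) = 0 by apply: big1 => j _; exact: qform_Bp_r.
  by have := lagr p; rewrite e1 e2 !addr0.
set Q := qform x (Bm k) x.
have L2 : \sum_j dotH (q j) (q j) = \sum_j (mu j)%:C + ((Num.sqrt (s k 0))%:C * (Num.sqrt (s k 0))%:C * eps%:C * eps%:C) * Q.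
  have e1 : \sum_j (mu j)%:C * Ck sigma2 gamma Rk q j = 0.
    by apply: big1 => j _; rewrite hCq mulr0.
  have e2 : \sum_j qform (q j) (Bm j) (q j) = ((Num.sqrt (s k 0))%:C * (Num.sqrt (s k 0))%:C * eps%:C * eps%:C) * Q.
    rewrite (@sum_only_k _ _ _ k); last first.
      by move=> i hi; rewrite /q /vv (negbTE hi) qformZv qform_Bp_r mulr0.
    rewrite /q /vv eqxx qformZv qformDv !qform_Bp_r qformZr qform_Bp_l qformZv.
    by rewrite !conj_realC mulr0 !add0r !mulrA.
  by have := lagr q; rewrite e1 e2 addr0.
move: hle; rewrite L1 L2 lerDl pmulr_rge0 //.
rewrite -!rmorphM -(rmorph0 (real_complex R)) ltcR.
have h1 : 0 < Num.sqrt (s k 0) by rewrite sqrtr_gt0.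
by rewrite !mulr_gt0 ?eps_gt0.
Qed.

End PSD.
End Main.

Section Final.
Variable R : realType.
Local Notation C := (R[i]).
Local Notation "x %:C" := (real_complex R x).

Lemma scal00 (a : C) (M : 'M[C]_1) : (a *: M) 0 0 = a * M 0 0.
Proof. by rewrite mxE. Qed.

Lemma qform0l n (A : 'M[C]_n) y : qform 0 A y = 0.
Proof.
have h : herm (0 : 'cV[C]_n) = 0 by apply/matrixP => i j; rewrite !mxE conjC0.
by rewrite /qform h !mul0mx mxE.
Qed.

Lemma Bm_rel Mt K sigma2 gamma (Rk : 'I_K -> 'M[C]_Mt) mu k :
  sigma2 != 0 -> gamma k != 0 ->
  sigma2%:C *: Bm R Mt K sigma2 gamma Rk mu k =
  ((sigma2%:C)%:M + \sum_(i < K | i != k) ((mu i)%:C *: Rk i))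
   - ((gamma k)^-1)%:C *: ((mu k)%:C *: Rk k).
Proof.
move=> hs hg.
rewrite /Bm scalerBr scalerDr scalemx1 scaler_sumr !scalerA -!rmorphM.
congr (_ + _ - _%:C *: _).
  apply: eq_bigr => i _; rewrite scalerA -rmorphM; congr (_%:C *: _).
  by field.
by rewrite invfM [mu k * _]mulrC !mulrA mulfV // mul1r.
Qed.

End Final.

Theorem theorem1 (R : realType) (Mt K N : nat) (sigma2 : R)
  (hbar : 'I_K -> 'cV[R[i]]_Mt) (beta : 'I_K -> R)
  (V : 'M[R[i]]_(Mt, N * Mt)) (lam : 'I_K -> 'rV[R]_(N * Mt))
  (gamma : 'I_K -> R) (p : 'I_K -> 'cV[R[i]]_Mt) (mu : 'I_K -> R)
  (rho : 'I_K -> R) (pbar : 'I_K -> 'cV[R[i]]_Mt) :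
  0 < sigma2 ->
  (forall k, 0 <= beta k <= 1) ->
  (forall k j, 0 <= lam k 0 j) ->
  (forall k, 0 < gamma k) ->
  let Rk := fun k => covR (beta k) (hbar k) V (lam k) in
  P3_optimal sigma2 gamma Rk p ->
  (forall k, 0 <= mu k) ->
  (forall k, p k + \sum_(i < K | i != k) (((mu i / sigma2)%:C)%C *: (Rk i *m p k))
               - (((mu k / (sigma2 * gamma k))%:C)%C *: (Rk k *m p k)) = 0) ->
  (forall k, ((mu k)%:C)%C * Ck sigma2 gamma Rk p k = 0) ->
  (forall k, 0 <= rho k) ->
  (forall k, dotH (pbar k) (pbar k) = 1) ->
  (forall k, p k = ((Num.sqrt (rho k))%:C)%C *: pbar k) ->
  forall k : 'I_K,
    let Sk := ((mu k)%:C)%C *: Rk k in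
    let Nk := (sigma2%:C)%C%:M + \sum_(i < K | i != k) (((mu i)%:C)%C *: Rk i) in
    exists lmax : R[i],
      max_gen_eigval Sk Nk lmax /\ gen_eigvec Sk Nk lmax (pbar k) /\
      lmax = ((gamma k)%:C)%C.
Proof.
move=> hs hb hl hg Rk hopt hmu hKKT hsl hrho hpbar hp k Sk Nk.
have hRh : forall j, herm (Rk j) = Rk j by move=> j; exact: covR_herm.
have hRp : forall j y, 0 <= qform y (Rk j) y.
  by move=> j y; apply: covR_psd; [exact: hb | exact: hl].
have hB := @B_psd R Mt K sigma2 gamma Rk p mu hs hg hRh hRp hopt hKKT hsl k.
have hs0 : sigma2 != 0 by rewrite lt0r_neq0.
have hg0 : gamma k != 0 by rewrite lt0r_neq0 // hg.
have hrel := @Bm_rel R Mt K sigma2 gamma Rk mu k hs0 hg0.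
have hBp := @Bp R Mt K sigma2 gamma Rk p mu hKKT k.
have hgc0 : ((gamma k)%:C)%C != 0 by rewrite fmorph_eq0.
have hNS : Sk *m p k = ((gamma k)%:C)%C *: (Nk *m p k).
  have : (Nk - (((gamma k)^-1)%:C)%C *: Sk) *m p k = 0.
    by rewrite /Nk /Sk -hrel -scalemxAl hBp scaler0.
  rewrite mulmxBl -scalemxAl => /eqP; rewrite subr_eq0 => /eqP ->.
  by rewrite scalerA -rmorphM mulfV // rmorph1 scale1r.
have hrho0 : rho k != 0.
  apply/eqP => h0.
  have hp0 : p k = 0 by rewrite hp h0 sqrtr0 rmorph0 scale0r.
  have h1 : (0 : R[i]) < 1 + ((sigma2^-1)%:C)%C *
      \sum_(i < K | i != k) qform (p i) (Rk k) (p i).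
    apply: ltr_wpDr ltr01; apply: mulr_ge0; first by rewrite ler0c invr_ge0 ltW.
    by apply: sumr_ge0 => i _; exact: hRp.
  have := hopt.1 k; rewrite /Ck hp0 qform0l mulr0 subr0 => hle.
  by have := lt_le_trans h1 hle; rewrite ltxx.
have hc : ((Num.sqrt (rho k))%:C)%C != 0.
  by rewrite fmorph_eq0 sqrtr_eq0 -ltNge lt0r hrho0 hrho.
have hpbar0 : pbar k != 0.
  apply/eqP => h; move: (hpbar k); rewrite h /dotH mulmx0 mxE => /esym/eqP.
  by rewrite oner_eq0.
have hSN : Sk *m pbar k = ((gamma k)%:C)%C *: (Nk *m pbar k).
  apply: (scalerI hc).
  move: hNS; rewrite hp -!scalemxAr => ->.
  by rewrite !scalerA mulrC.
exists ((gamma k)%:C)%C; split; last by split.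
split; first by exists (pbar k).
move=> l [y [yn0 hy]].
have n_pos : 0 < qform y Nk y.
  rewrite /Nk qformDm qform_sum -scalemx1 qformZm qform1.
  apply: ltr_wpDr.
    apply: sumr_ge0 => i _; rewrite qformZm; apply: mulr_ge0; last exact: hRp.
    by rewrite ler0c hmu.
  apply: mulr_gt0; first by rewrite -(rmorph0 (real_complex R)) ltcR.
  rewrite lt0r dotH_ge0 andbT; apply/eqP => /dotH_eq0 h.
  by move/eqP: yn0.
have hq : 0 <= qform y (((sigma2)%:C)%C *: Bm R Mt K sigma2 gamma Rk mu k) y.
  by rewrite qformZm mulr_ge0 // ler0c ltW.
rewrite hrel qformBm qformZm in hq.
have hSy : qform y Sk y = l * qform y Nk y.
  by rewrite !qformE hy -scalemxAr scal00.
rewrite -/Sk -/Nk hSy mulrA in hq.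
have h2 : 0 <= (1 - ((gamma k)^-1)%:C%C * l) * qform y Nk y.
  by rewrite mulrBl mul1r.
rewrite pmulr_lge0 // in h2.
have h3 : 0 <= ((gamma k)%:C)%C * (1 - ((gamma k)^-1)%:C%C * l).
  by rewrite mulr_ge0 // ler0c ltW.
rewrite mulrBr mulr1 mulrA -rmorphM mulfV // rmorph1 mul1r subr_ge0 in h3.
exact: h3.
Qed.
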